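(* Let $i\geq 5$ and $j\geq 1$ be integers. Then $$R_1^{\mathcal{CA}}(i,j)=\begin{cases}2j-1, & \text{if } j \text{ is odd},\\ 2j-2, & \text{if } j \text{ is even},\end{cases}$$ where $\mathcal{CA}$ is the class of cacti.
   Context: All graphs are finite and simple. For a graph $G$ and a nonnegative integer $k$, a $k$-sparse $j$-set is a set of $j$ vertices of $G$ inducing a subgraph of maximum degree at most $k$; a $k$-dense $i$-set is a set of $i$ vertices of $G$ that is $k$-sparse in the complement of $G$. For a graph class $\mathcal{G}$, $R_k^{\mathcal{G}}(i,j)$ is the smallest natural number $n$ such that every graph on $n$ vertices in $\mathcal{G}$ has either a $k$-dense $i$-set or a $k$-sparse $j$-set. A cactus is a graph (not necessarily connected) in which every block (maximal 2-connected subgraph, bridge, or isolated vertex) is a cycle, a single edge, or a single vertex. *)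

(* Defs.v *)
From mathcomp Require Import all_boot.
Set Implicit Arguments. Unset Strict Implicit. Unset Printing Implicit Defensive.

Definition simple_graph (V : finType) (e : rel V) : Prop :=
  symmetric e /\ irreflexive e.

Definition induced (V : finType) (e : rel V) (S : {set V}) : rel V :=
  [rel x y | [&& x \in S, y \in S & e x y]].

(* G[S] is connected (the empty set counts as connected). *)
Definition induced_connected (V : finType) (e : rel V) (S : {set V}) : bool :=
  [forall x in S, forall y in S, connect (induced e S) x y].

Definition nonseparable (V : finType) (e : rel V) (B : {set V}) : bool :=
  [&& B != set0, induced_connected e B &
      [forall v in B, induced_connected e (B :\ v)]].

(* A block: maximal nonseparable (induced) subgraph, given by its vertex set.
   (Blocks of simple graphs are induced subgraphs.) *)
Definition is_block (V : finType) (e : rel V) (B : {set V}) : bool :=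
  maxset (nonseparable e) B.

Definition induces_cycle (V : finType) (e : rel V) (B : {set V}) : bool :=
  [&& 3 <= #|B|, induced_connected e B &
      [forall v in B, #|[set u in B | e v u]| == 2]].

Definition cactus (V : finType) (e : rel V) : bool :=
  [forall B : {set V}, is_block e B ==>
     [|| induces_cycle e B,
         (#|B| == 2) && [forall x in B, forall y in B, (x != y) ==> e x y]
       | #|B| == 1]].

Definition sparse_set (V : finType) (e : rel V) (k j : nat) (S : {set V}) : bool :=
  (#|S| == j) && [forall v in S, #|[set u in S | e v u]| <= k].

Definition compl_rel (V : finType) (e : rel V) : rel V :=
  [rel x y | (x != y) && ~~ e x y].

Definition dense_set (V : finType) (e : rel V) (k i : nat) (S : {set V}) : bool :=
  sparse_set (compl_rel e) k i S.

Definition ramsey_cactus_prop (k i j n : nat) : Prop :=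
  forall e : rel 'I_n, simple_graph e -> cactus e ->
    (exists S : {set 'I_n}, dense_set e k i S) \/
    (exists S : {set 'I_n}, sparse_set e k j S).

Definition is_ramsey_cactus (k i j r : nat) : Prop :=
  ramsey_cactus_prop k i j r /\ forall n, n < r -> ~ ramsey_cactus_prop k i j n.

(* Main.v *)
Require Import Defs.
From mathcomp Require Import all_boot zify.
From Stdlib Require Import Classical.
Set Implicit Arguments. Unset Strict Implicit. Unset Printing Implicit Defensive.

Section G.
Variable V : finType.
Variable e : rel V.
Hypothesis esym : symmetric e.
Hypothesis eirr : irreflexive e.

Lemma induced_sym (B : {set V}) : symmetric (induced e B).
Proof. by move=> x y; rewrite /induced /= esym andbCA. Qed.

Lemma first_step (r : rel V) x y : connect r x y -> x != y -> exists z, r x z.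
Proof.
case/connectP=> [[|z p]] /=; first by move=> _ ->; rewrite eqxx.
by case/andP=> H _ _ _; exists z.
Qed.

Lemma path_conn (B : {set V}) a p :
  path e a p -> all (fun z => z \in B) (a :: p) ->
  forall z, z \in a :: p -> connect (induced e B) a z.
Proof.
elim: p a => [|b p IH] a /=.
  by move=> _ _ z; rewrite inE => /eqP ->.
case/andP=> eab pb /and3P[aB bB allp] z.
rewrite inE => /orP[/eqP -> //|zp].
apply: connect_trans (IH b pb _ z zp); last by rewrite /= bB.
by apply: connect1; rewrite /induced /= aB bB.
Qed.

Lemma hub_connected (B : {set V}) a :
  (forall z, z \in B -> connect (induced e B) a z) -> induced_connected e B.
Proof.
move=> H; apply/forallP=> x; apply/implyP=> xB; apply/forallP=> y; apply/implyP=> yB.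
apply: connect_trans (H y yB).
by rewrite (sym_connect_sym (@induced_sym B)); apply: H.
Qed.

Lemma connected_sub (A B : {set V}) x y : A \subset B ->
  connect (induced e A) x y -> connect (induced e B) x y.
Proof.
move=> AB; apply: connect_sub => u v /= /and3P[uA vA euv].
by apply: connect1; rewrite /induced /= (subsetP AB _ uA) (subsetP AB _ vA).
Qed.

Lemma conn_union (A B : {set V}) w :
  induced_connected e A -> induced_connected e B -> w \in A -> w \in B ->
  induced_connected e (A :|: B).
Proof.
move=> /forallP cA /forallP cB wA wB; apply: (@hub_connected _ w) => z.
rewrite inE => /orP[zA|zB].
  apply: (@connected_sub A); first exact: subsetUl.
  by move: (cA w); rewrite wA /= => /forallP/(_ z); rewrite zA.
apply: (@connected_sub B); first exact: subsetUr.
by move: (cB w); rewrite wB /= => /forallP/(_ z); rewrite zB.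
Qed.

Lemma nonsep_union (A B : {set V}) x y :
  nonseparable e A -> nonseparable e B -> x != y ->
  x \in A -> x \in B -> y \in A -> y \in B -> nonseparable e (A :|: B).
Proof.
case/and3P=> _ cA /forallP dA; case/and3P=> _ cB /forallP dB nxy xA xB yA yB.
apply/and3P; split.
- by apply/set0Pn; exists x; rewrite inE xA.
- exact: conn_union cA cB xA xB.
apply/forallP=> v; apply/implyP=> _; rewrite setDUl.
move: (dA v) (dB v) => /implyP dAv /implyP dBv.
have [vA|vA] := boolP (v \in A); have [vB|vB] := boolP (v \in B).
- have [w [wA wB]] : exists w, w \in A :\ v /\ w \in B :\ v.
    case: (eqVneq x v) => [exv|nxv].
      by exists y; rewrite !inE yA yB -exv eq_sym nxy.
    by exists x; rewrite !inE xA xB nxv.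
  exact: conn_union (dAv vA) (dBv vB) wA wB.
- have -> : B :\ v = B by apply/setDidPl; rewrite disjoint_sym disjoints1.
  case: (eqVneq x v) => [exv|nxv]; first by rewrite -exv xB in vB.
  by apply: conn_union (dAv vA) cB _ xB; rewrite !inE nxv.
- have -> : A :\ v = A by apply/setDidPl; rewrite disjoint_sym disjoints1.
  case: (eqVneq x v) => [exv|nxv]; first by rewrite -exv xA in vA.
  by apply: conn_union cA (dBv vB) xA _; rewrite !inE nxv.
- have -> : A :\ v = A by apply/setDidPl; rewrite disjoint_sym disjoints1.
  have -> : B :\ v = B by apply/setDidPl; rewrite disjoint_sym disjoints1.
  exact: conn_union cA cB xA xB.
Qed.

End G.

Section G.
Variable V : finType.
Variable e : rel V.
Hypothesis esym : symmetric e.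
Hypothesis eirr : irreflexive e.

Lemma cycle_nonsep x s : path e x s -> e (last x s) x -> uniq (x :: s) ->
  2 <= size s -> nonseparable e [set z in x :: s].
Proof.
move=> px ex ux ss; apply/and3P; split.
- by apply/set0Pn; exists x; rewrite inE mem_head.
- apply: (@hub_connected _ _ esym _ x) => z; rewrite inE => zc.
  apply: (@path_conn _ e _ x s px _ z zc); apply/allP=> w wc; by rewrite inE.
apply/forallP=> v; apply/implyP; rewrite inE => vc.
set c := x :: s.
have cyc : cycle e c by rewrite /c /= rcons_path px ex.
have vlt : index v c < size c by rewrite index_mem.
have rdef : rot (index v c) c = v :: (drop (index v c).+1 c ++ take (index v c) c).
  by rewrite /rot (drop_nth v vlt) nth_index.
move: (cyc); rewrite -(rot_cycle (index v c)) rdef.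
set w := drop _ _ ++ _ => cw.
have uw : uniq (v :: w) by rewrite -rdef rot_uniq.
have memw z : z \in c -> z != v -> z \in w.
  by move=> zc zv; move: zc; rewrite -(mem_rot (index v c)) rdef inE (negbTE zv).
have wc z : z \in w -> z \in c.
  by move=> zw; rewrite -(mem_rot (index v c)) rdef inE zw orbT.
have sw : size w = size s by move: (size_rot (index v c) c); rewrite rdef /= => -[].
case: w cw uw memw wc sw => [|a w'] cw uw memw wc sw; first by rewrite -sw in ss.
move: cw => /= /andP[_]; rewrite rcons_path => /andP[pa _].
apply: (@hub_connected _ _ esym _ a) => z; rewrite !inE => /andP[zv zc].
apply: (@path_conn _ e _ a w') => //; last exact: memw.
apply/allP=> y yw; rewrite !inE.
have := wc _ yw; rewrite /c inE => ->; rewrite andbT.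
by apply/negP=> /eqP yv; move: uw; rewrite /= -yv yw.
Qed.

End G.

Section G.
Variable V : finType.
Variable e : rel V.
Hypothesis esym : symmetric e.
Hypothesis eirr : irreflexive e.

Definition Nb (U : {set V}) v := [set u in U | e v u].
Definition Pp (U : {set V}) := forall B : {set V}, B \subset U -> nonseparable e B ->
  forall v, v \in B -> #|[set u in B | e v u]| <= 2.
Definition goodp (U : {set V}) x t :=
  [&& path e x t, uniq (x :: t) & all (fun z => z \in U) (x :: t)].
Definition longest U x t :=
  goodp U x t /\ forall x' t', goodp U x' t' -> size t' <= size t.

Lemma prefix_nonsep x b t y : path e x (b :: t) -> uniq (x :: b :: t) ->
  y \in t -> e x y ->
  exists B, [/\ nonseparable e B, {subset B <= x :: b :: t},
     [&& x \in B, b \in B & y \in B] & forall c t', t = c :: t' -> c \in B].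
Proof.
move=> pt ut yt exy; case/splitPr: t / yt pt ut => p1 p2 pt ut.
have eq1 : b :: (p1 ++ y :: p2) = (b :: rcons p1 y) ++ p2 by rewrite -cat_rcons.
exists [set z in x :: b :: rcons p1 y]; split.
- apply: cycle_nonsep => //.
  + by move: pt; rewrite eq1 cat_path => /andP[].
  + by rewrite /= last_rcons esym.
  + by move: ut; rewrite eq1 -cat_cons cat_uniq => /andP[].
  + by rewrite /= size_rcons.
- move=> z; rewrite inE !(inE, mem_cat, mem_rcons) => /orP[->//|/orP[->|]].
    by rewrite orbT.
  by case/orP=> ->; rewrite !orbT.
- by rewrite !inE !mem_rcons !mem_head !eqxx !orbT.
- case: p1 {pt ut eq1} => [|c1 p1] c t' /= [<- _]; by rewrite !inE ?mem_rcons ?mem_head eqxx !orbT.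
Qed.


Lemma goodp_sub U x t z : goodp U x t -> z \in x :: t -> z \in U.
Proof. by case/and3P=> _ _ /allP; apply. Qed.

Lemma head_deg U x t : Pp U -> goodp U x t ->
  #|[set u | (u \in t) && e x u]| <= 2.
Proof.
move=> PU; elim/last_ind: t => [|t0 y IH] gt.
  by rewrite (_ : [set u | _] = set0) ?cards0 //; apply/setP=> u; rewrite !inE.
have gt0 : goodp U x t0.
  move: gt; rewrite /goodp -rcons_cons rcons_path rcons_uniq all_rcons.
  by case/and3P=> /andP[-> _] /andP[_ ->] /andP[_ ->].
have [exy|nexy] := boolP (e x y); last first.
  rewrite (_ : [set u | _] = [set u | (u \in t0) && e x u]); first exact: IH.
  apply/setP=> u; rewrite !inE mem_rcons inE.
  by case: (eqVneq u y) => [->|]; rewrite ?(negbTE nexy) ?andbF.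
case: t0 {IH} gt gt0 => [|a t0] gt gt0.
  apply: leq_trans (subset_leq_card (_ : _ \subset [set y])) _; last by rewrite cards1.
  by apply/subsetP=> u; rewrite !inE => /andP[].
have nsB : nonseparable e [set z in x :: rcons (a :: t0) y].
  case/and3P: (gt) => pt ut _; apply: cycle_nonsep => //.
  by rewrite last_rcons esym.
  by rewrite size_rcons.
have sub : [set z in x :: rcons (a :: t0) y] \subset U.
  by apply/subsetP=> z; rewrite in_set => zin; apply: (goodp_sub gt zin).
apply: leq_trans (PU _ sub nsB x _); last by rewrite inE mem_head.
apply: subset_leq_card; apply/subsetP=> u; rewrite !inE => /andP[-> ->].
by rewrite orbT.
Qed.


Lemma goodp_size (U : {set V}) x t : goodp U x t -> size t < #|V|.
Proof.
case/and3P=> _ u _; have := max_card (mem (x :: t)).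
by rewrite (card_uniqP u).
Qed.

Lemma longest_exists (U : {set V}) z : z \in U -> exists x t, longest U x t.
Proof.
move=> zU.
suff H : forall d x t, goodp U x t -> #|V| - size t <= d -> exists x t, longest U x t.
  apply: (H #|V| z [::]); last by rewrite subn0.
  by rewrite /goodp /= zU.
elim=> [|d IH] x t gt hd.
  case: (classic (forall x' t', goodp U x' t' -> size t' <= size t)) => [H|H].
    by exists x, t; split.
  have [x' Hx] := not_all_ex_not _ _ H.
  have [t' Ht] := not_all_ex_not _ _ Hx.
  have [g' /negP] := imply_to_and _ _ Ht.
  rewrite -ltnNge => lt; have := goodp_size g'; have := goodp_size gt.
  lia.
case: (classic (forall x' t', goodp U x' t' -> size t' <= size t)) => [H|H].
  by exists x, t; split.
have [x' Hx] := not_all_ex_not _ _ H.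
  have [t' Ht] := not_all_ex_not _ _ Hx.
  have [g' /negP] := imply_to_and _ _ Ht.
rewrite -ltnNge => lt; have := goodp_size g'; have := goodp_size gt.
move=> _ _; apply: (IH x' t' g'); lia.
Qed.

Lemma longest_nb (U : {set V}) x t y : longest U x t -> y \in U -> e x y -> y \in t.
Proof.
case=> gt H yU exy; apply/negPn/negP=> yt.
have yx : y != x by apply/eqP=> yx; rewrite yx eirr in exy.
have : goodp U y (x :: t).
  case/and3P: gt => pt ut at_; rewrite /goodp /= esym exy pt /= inE negb_or yx yt.
  by move: ut at_ => /= -> /= ->; rewrite yU.
by move/H; rewrite /= ltnn.
Qed.

Lemma longest_deg (U : {set V}) x t : Pp U -> longest U x t -> #|Nb U x| <= 2.
Proof.
move=> PU L; apply: leq_trans (head_deg PU (proj1 L)).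
apply: subset_leq_card; apply/subsetP=> u; rewrite !inE => /andP[uU exu].
by rewrite (longest_nb L uU exu).
Qed.

Lemma longest_swap (U : {set V}) x t y t' : longest U x t -> goodp U y t' -> size t' = size t ->
  longest U y t'.
Proof. by case=> _ H g s; split => // x2 t2 /H; rewrite s. Qed.

End G.

Section Card.
Variable V : finType.
Lemma ccard2 (A : {set V}) a b : a \in A -> b \in A -> a != b -> 1 < #|A|.
Proof.
move=> aA bA ab; rewrite (cardsD1 a) aA ltnS card_gt0; apply/set0Pn; exists b.
by rewrite !inE eq_sym ab.
Qed.
Lemma ccard3 (A : {set V}) a b c : a \in A -> b \in A -> c \in A -> a != b -> a != c -> b != c -> 2 < #|A|.
Proof.
move=> aA bA cA ab ac bc; rewrite (cardsD1 a) aA ltnS; apply: (@ccard2 _ b c) => //;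
by rewrite !inE ?bA ?cA eq_sym ?ab ?ac.
Qed.
Lemma cardU1_le (A : {set V}) x : #|A :|: [set x]| <= #|A| + 1.
Proof. by rewrite -(cards1 x); exact: (leq_card_setU A [set x]).1. Qed.
Lemma card_sub3 (A : {set V}) a b c : A \subset [set a; b; c] -> #|A| <= 4.
Proof.
move/subset_leq_card=> H; apply: leq_trans H _.
apply: leq_trans (cardU1_le _ _) _; rewrite -[4]/(3+1) leq_add2r.
apply: leq_trans (cardU1_le _ _) _; by rewrite cards1.
Qed.
Lemma card_sub4 (A : {set V}) a b c d : A \subset [set a; b; c; d] -> #|A| <= 4.
Proof.
move/subset_leq_card=> H; apply: leq_trans H _.
apply: leq_trans (cardU1_le _ _) _; rewrite -[4]/(3+1) leq_add2r.
apply: leq_trans (cardU1_le _ _) _; rewrite -[3]/(2+1) leq_add2r.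
apply: leq_trans (cardU1_le _ _) _; by rewrite cards1.
Qed.
End Card.

Section G.
Variable V : finType.
Variable e : rel V.
Hypothesis esym : symmetric e.
Hypothesis eirr : irreflexive e.

Definition move_ok (U : {set V}) :=
  (exists v, v \in U /\ Nb e U v = set0) \/
  (exists a b, [/\ a \in U, b \in U, a != b &
     #|[set a; b] :|: Nb e U a :|: Nb e U b| <= 4]).

Lemma caseA (U : {set V}) x v1 s' : Pp e U -> longest e U x (v1 :: s') ->
  #|Nb e U x| = 2 -> move_ok U.
Proof.
move=> PU L dx.
have [gt _] := L; case/and3P: (gt) => pt ut at_.
have inU z : z \in x :: v1 :: s' -> z \in U := goodp_sub gt.
have xv1 : e x v1 by case/andP: pt.
have v1U : v1 \in U by apply: inU; rewrite !inE eqxx orbT.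
have xU : x \in U by apply: inU; rewrite !inE eqxx.
have v1N : v1 \in Nb e U x by rewrite inE v1U xv1.
have [va vaN vav1] : exists2 va, va \in Nb e U x & va != v1.
  have : 0 < #|Nb e U x :\ v1|.
    by have := cardsD1 v1 (Nb e U x); rewrite v1N dx /=; lia.
  by rewrite card_gt0 => /set0Pn[va]; rewrite !inE => /andP[H1 H2]; exists va; rewrite ?inE.
have vaU : va \in U by move: vaN; rewrite inE => /andP[].
have exva : e x va by move: vaN; rewrite inE => /andP[].
have NX z : z \in Nb e U x -> z = v1 \/ z = va.
  move=> zN; case: (eqVneq z v1) => [->|zv1]; first by left.
  case: (eqVneq z va) => [->|zva]; first by right.
  have v1va : v1 != va by rewrite eq_sym.
  by have := ccard3 zN v1N vaN zv1 zva v1va; rewrite dx.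
have vas' : va \in s'.
  by have := longest_nb esym eirr L vaU exva; rewrite inE (negbTE vav1).
case: s' L gt pt ut at_ inU vas' => [|v2 s''] // L gt pt ut at_ inU vas'.
have [BC [nsC subC /and3P[xC v1C vaC] hC]] := prefix_nonsep esym pt ut vas' exva.
have v2C := hC v2 s'' erefl.
have subCU : BC \subset U by apply/subsetP=> z /subC; apply: inU.
have [xv2 v12] : x != v2 /\ v1 != v2.
  by move: ut; rewrite /= !inE !negb_or => /andP[/and3P[_ -> _] /andP[/andP[-> _] _]].
have ev12 : e v1 v2 by move: pt => /= /and3P[].
have contra (D : {set V}) w : nonseparable e D -> D \subset U -> v1 \in D ->
    v2 \in D -> w \in D -> e v1 w -> w != x -> w != v2 -> False.
  move=> nsD sD v1D v2D wD ev1w wx wv2.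
  have nsU := nonsep_union esym nsC nsD v12 v1C v1D v2C v2D.
  have sU : BC :|: D \subset U by rewrite subUset subCU sD.
  have := PU _ sU nsU v1; rewrite inE v1C => /(_ isT).
  have : 2 < #|[set u in BC :|: D | e v1 u]|.
    apply: (@ccard3 _ _ x v2 w) => //; rewrite ?inE ?xC ?v2C ?wD ?orbT ?ev12 ?ev1w //.
    all: try by rewrite esym.
    by rewrite eq_sym.
    by rewrite eq_sym.
  by move=> lt le; move: (leq_ltn_trans le lt); rewrite ltnn.
have [_ pt1] := andP pt.
have [_ ut1] := andP ut.
have [_ at1] := andP at_.
have C1 u w : u \in Nb e U v1 -> u \notin [:: x, v1, v2 & s''] ->
    w \in Nb e U u -> w = v1.
  move=> uN uP wN.
  have [uU ev1u] : u \in U /\ e v1 u by move: uN; rewrite inE => /andP[].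
  have [wU euw] : w \in U /\ e u w by move: wN; rewrite inE => /andP[].
  have uP' : u \notin [:: v1, v2 & s''] by move: uP; rewrite inE negb_or => /andP[].
  have pu : path e u [:: v1, v2 & s''] by rewrite /= esym ev1u.
  have uu : uniq [:: u, v1, v2 & s''] by rewrite /= uP'.
  have gu : goodp e U u [:: v1, v2 & s''] by rewrite /goodp pu uu /= uU.
  have Lu := longest_swap L gu erefl.
  have := longest_nb esym eirr Lu wU euw; rewrite inE.
  case: eqVneq => [//|wv1] /= wt.
  have [D [nsD subD /and3P[uD v1D wD] hD]] := prefix_nonsep esym pu uu wt euw.
  have v2D := hD v2 s'' erefl.
  have sD : D \subset U.
    apply/subsetP=> z /subD; rewrite in_cons => /orP[/eqP->//|zz]; apply: inU.
    by rewrite in_cons zz orbT.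
  exfalso; apply: (contra D u) => //.
  - by apply/eqP=> ux; move: uP; rewrite ux inE eqxx.
  - by apply/eqP=> ux; move: uP'; rewrite ux !inE eqxx orbT.
have C2 u : u \in Nb e U v1 -> u \in [:: x, v1, v2 & s''] -> u = x \/ u = v2.
  move=> uN.
  have [uU ev1u] : u \in U /\ e v1 u by move: uN; rewrite inE => /andP[].
  rewrite inE; case: eqVneq => [->|ux] /=; first by left.
  rewrite inE; case: eqVneq => [uv1|uv1] /=; first by rewrite uv1 eirr in ev1u.
  rewrite inE; case: eqVneq => [->|uv2] /=; first by right.
  move=> us.
  have [D [nsD subD /and3P[v1D v2D uD] _]] := prefix_nonsep esym pt1 ut1 us ev1u.
  have sD : D \subset U.
    by apply/subsetP=> z /subD zz; apply: inU; rewrite in_cons zz orbT.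
  by exfalso; apply: (contra D u).
set P := [:: x, v1, v2 & s''] in C1 C2.
set Q := [set u in Nb e U v1 | u \notin P].
have QN u : u \in Q -> u \in Nb e U v1 /\ u \notin P by rewrite inE => /andP[].
have QU u : u \in Q -> u \in U by case/QN; rewrite inE => /andP[].
have Qv1 u : u \in Q -> u != v1.
  by case/QN=> _; apply: contraNneq => ->; rewrite /P !inE eqxx orbT.
have N1 z : z \in Nb e U v1 -> [\/ z = x, z = v2 | z \in Q].
  move=> zN; case: (boolP (z \in P)) => zP.
    by case: (C2 z zN zP) => ->; [apply: Or31 | apply: Or32].
  by apply: Or33; rewrite inE zN zP.
right; case: (ltnP 1 #|Q|) => hQ.
  have : Q != set0 by rewrite -card_gt0; apply: ltnW.
  case/set0Pn=> u uQ.
  have : Q :\ u != set0.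
    by rewrite -card_gt0; move: hQ; rewrite (cardsD1 u Q) uQ.
  case/set0Pn=> u'; rewrite in_setD1 => /andP[u'u u'Q].
  exists u, u'; split; [exact: QU | exact: QU | by rewrite eq_sym |].
  apply: (@card_sub3 _ _ u u' v1); apply/subsetP=> z; rewrite !in_setU !in_set1.
  case/orP=> [/orP[/orP[->|->]|zN]|zN]; rewrite ?orbT //.
    by rewrite (C1 u z (proj1 (QN u uQ)) (proj2 (QN u uQ)) zN) eqxx !orbT.
  by rewrite (C1 u' z (proj1 (QN u' u'Q)) (proj2 (QN u' u'Q)) zN) eqxx !orbT.
case: (set0Pn Q) => [[u uQ]|Q0].
  have Qu z : z \in Q -> z = u.
    move=> zQ; apply/eqP; apply/negPn/negP => zu.
    by have := ccard2 zQ uQ zu; rewrite ltnNge hQ.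
  exists u, v1; split; [exact: QU | by [] | exact: Qv1 |].
  apply: (@card_sub4 _ _ u v1 x v2); apply/subsetP=> z; rewrite !in_setU !in_set1.
  case/orP=> [/orP[/orP[->|->]|zN]|zN]; rewrite ?orbT //.
    by rewrite (C1 u z (proj1 (QN u uQ)) (proj2 (QN u uQ)) zN) eqxx !orbT.
  by case: (N1 z zN) => [->|->|/Qu ->]; rewrite ?eqxx ?orbT.
have Q0' : Q = set0 by apply/eqP; apply/negPn/negP=> H; apply: Q0; apply/set0Pn.
exists x, v1; split; [by [] | by [] | by apply/eqP=> xe; rewrite xe eirr in xv1 |].
apply: (@card_sub4 _ _ x v1 va v2); apply/subsetP=> z; rewrite !in_setU !in_set1.
case/orP=> [/orP[/orP[->|->]|zN]|zN]; rewrite ?orbT //.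
  by case: (NX z zN) => ->; rewrite ?eqxx ?orbT.
by case: (N1 z zN) => [->|->|]; rewrite ?Q0' ?inE ?eqxx ?orbT.
Qed.

End G.

Section G.
Variable V : finType.
Variable e : rel V.
Hypothesis esym : symmetric e.
Hypothesis eirr : irreflexive e.

Lemma caseB (U : {set V}) x v1 s' : Pp e U -> longest e U x (v1 :: s') ->
  #|Nb e U x| = 1 -> move_ok e U.
Proof.
move=> PU L dx.
have [gt _] := L; case/and3P: (gt) => pt ut at_.
have inU z : z \in x :: v1 :: s' -> z \in U := goodp_sub gt.
have xv1 : e x v1 by case/andP: pt.
have v1U : v1 \in U by apply: inU; rewrite !inE eqxx orbT.
have xU : x \in U by apply: inU; rewrite !inE eqxx.
have v1N : v1 \in Nb e U x by rewrite inE v1U xv1.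
have NX z : z \in Nb e U x -> z = v1.
  move=> zN; apply/eqP; apply/negPn/negP => zv.
  by have := ccard2 zN v1N zv; rewrite dx.
have [_ pt1] := andP pt.
have [_ ut1] := andP ut.
have [_ at1] := andP at_.
have xv1' : x != v1 by apply/eqP=> xe; rewrite xe eirr in xv1.
have offL u : u \in Nb e U v1 -> u \notin [:: x, v1 & s'] -> longest e U u (v1 :: s').
  move=> uN uP.
  have [uU ev1u] : u \in U /\ e v1 u by move: uN; rewrite inE => /andP[].
  have uP' : u \notin v1 :: s' by move: uP; rewrite in_cons negb_or => /andP[].
  apply: (longest_swap L) => //.
  apply/and3P; split; first by rewrite /= esym ev1u.
    by rewrite cons_uniq uP'.
  by rewrite /= uU; exact: at1.
case: (boolP [exists u, [&& u \in Nb e U v1, u \notin [:: x, v1 & s'] & #|Nb e U u| == 2]]).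
  case/existsP=> u /and3P[uN uP /eqP du].
  exact: (caseA esym eirr PU (offL u uN uP) du).
move=> /existsPn H.
case: (boolP [exists u, (u \in Nb e U v1) && (u \notin [:: x, v1 & s'])]).
  case/existsP=> u /andP[uN uP].
  have Lu := offL u uN uP.
  have [uU ev1u] : u \in U /\ e v1 u by move: uN; rewrite inE => /andP[].
  have v1Nu : v1 \in Nb e U u by rewrite inE v1U esym ev1u.
  have NU z : z \in Nb e U u -> z = v1.
    move=> zN; apply/eqP; apply/negPn/negP => zv.
    have d2 := ccard2 zN v1Nu zv.
    have d3 := longest_deg esym eirr PU Lu.
    by move: (H u); rewrite uN uP /= eqn_leq d3 d2.
  right; exists x, u; split => //.
    by apply: contraNneq uP => <-; rewrite mem_head.
  apply: (@card_sub3 _ _ x u v1); apply/subsetP=> z; rewrite !in_setU !in_set1.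
  case/orP=> [/orP[/orP[->|->]|/NX ->]|/NU ->]; by rewrite ?eqxx ?orbT.
move=> /existsPn H2.
right; exists x, v1; split => //.
set T := [set w | (w \in s') && e v1 w].
have dT : #|T| <= 2.
  apply: (head_deg esym PU); apply/and3P; split => //; exact: at1.
have sub : [set x; v1] :|: Nb e U x :|: Nb e U v1 \subset [set x; v1] :|: T.
  apply/subsetP=> z; rewrite !in_setU !in_set1.
  case/orP=> [/orP[->//|/NX ->]|zN]; first by rewrite eqxx orbT.
  have := H2 z; rewrite zN /= negbK !inE.
  case/orP=> [->//|/orP[/eqP zv1|zs]].
    by move: zN; rewrite zv1 inE eirr andbF.
  by move: zN; rewrite inE zs => /andP[_ ->]; rewrite !orbT.
apply: leq_trans (subset_leq_card sub) _.
apply: leq_trans (leq_card_setU _ _).1 _.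
by rewrite cards2 xv1'; move: dT; clear; lia.
Qed.

End G.

Definition gfun n := 2 * (n %/ 4) + minn (n %% 4) 2.
Lemma gfun1 n : 0 < n -> gfun n <= gfun (n-1) + 1. Proof. rewrite /gfun. lia. Qed.
Lemma gfun4 n x : x <= 4 -> x <= n -> gfun n <= gfun (n-x) + 2. Proof. rewrite /gfun. lia. Qed.

Section G.
Variable V : finType.
Variable e : rel V.
Hypothesis esym : symmetric e.
Hypothesis eirr : irreflexive e.

Lemma move_exists (U : {set V}) : Pp e U -> U != set0 -> move_ok e U.
Proof.
move=> PU /set0Pn[z zU].
have [x [t L]] := longest_exists e zU.
have xU : x \in U by apply: (goodp_sub (proj1 L)); rewrite mem_head.
have dx := longest_deg esym eirr PU L.
case: t L => [|v1 s'] L.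
  left; exists x; split => //; apply/setP=> y; rewrite inE [RHS]inE.
  by apply/negP=> /andP[yU exy]; have := longest_nb esym eirr L yU exy.
move: dx; rewrite leq_eqVlt ltnS leq_eqVlt ltnS leqn0 => /orP[/eqP d2|/orP[/eqP d1|/eqP d0]].
- exact: (caseA esym eirr PU L d2).
- exact: (caseB esym eirr PU L d1).
- by left; exists x; split => //; apply/eqP; rewrite -cards_eq0 d0.
Qed.

Definition spr (S : {set V}) := forall v, v \in S -> #|[set u in S | e v u]| <= 1.

Lemma main_lb (U : {set V}) : Pp e U -> exists S : {set V}, [/\ S \subset U, spr S & gfun #|U| <= #|S|].
Proof.
move: {2}#|U| (leqnn #|U|) => n; elim: n U => [|n IH] U hU PU.
  exists set0; split; rewrite ?sub0set //; first by move=> v; rewrite inE.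
  by move: hU; rewrite leqn0 => /eqP ->.
case: (eqVneq U set0) => [->|U0].
  exists set0; split; rewrite ?sub0set //; first by move=> v; rewrite inE.
  by rewrite cards0.
have PUsub (W : {set V}) : W \subset U -> Pp e W.
  by move=> WU B BW; apply: PU; apply: subset_trans BW WU.
case: (move_exists PU U0) => [[v [vU Nv]]|[a [b [aU bU ab c4]]]].
- set U' := U :\ v.
  have cU' : #|U'| = #|U| - 1 by rewrite /U' (cardsD1 v U) vU add1n subn1.
  have hU' : #|U'| <= n by rewrite cU' leq_subLR add1n.
  have [S' [S'U sp' gS']] := IH U' hU' (PUsub _ (subD1set U v)).
  have vS' : v \notin S' by apply/negP=> /(subsetP S'U); rewrite /U' in_setD1 eqxx.
  exists (v |: S'); split.
  + by rewrite subUset sub1set vU (subset_trans S'U) // subD1set.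
  + have S'U0 u : u \in S' -> u \in U by move/(subsetP S'U); rewrite in_setD1 => /andP[].
    have nev u : u \in U -> e v u = false.
      move=> uU; apply/negP=> evu; have : u \in Nb e U v by rewrite inE uU evu.
      by rewrite Nv inE.
    move=> w; rewrite in_setU1 => /orP[/eqP ->|wS].
      suff -> : [set u in v |: S' | e v u] = set0 by rewrite cards0.
      apply/setP=> u; rewrite !inE; apply/negP=> /andP[uS evu].
      have uU : u \in U by move: uS => /orP[/eqP ->//|/S'U0].
      by rewrite nev in evu.
    suff -> : [set u in v |: S' | e w u] = [set u in S' | e w u] by apply: sp'.
    apply/setP=> u; rewrite !inE; case: eqVneq => [->|] //=.
    by rewrite esym nev ?andbF // S'U0.
  + by rewrite cardsU1 vS' add1n; apply: leq_trans (gfun1 _) _; rewrite ?card_gt0 ?U0 // -cU' addn1.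
- set X := [set a; b] :|: Nb e U a :|: Nb e U b in c4.
  have NbX y u : y \in [set a; b] -> u \in U -> e y u -> u \in X.
    move=> yab uU; rewrite /X !in_setU.
    by move: yab; rewrite !inE => /orP[]/eqP-> eyu; rewrite uU eyu ?orbT.
  have abX y : y \in [set a; b] -> y \in X by move=> yab; rewrite /X -setUA in_setU yab.
  have XU : X \subset U.
    apply/subsetP=> y; rewrite /X !in_setU !inE.
    by case/orP=> [/orP[/orP[]/eqP->//|]|] /andP[].
  set U' := U :\: X.
  have cU' : #|U'| = #|U| - #|X|.
    by rewrite /U' cardsD (setIidPr XU).
  have X1 : 0 < #|X| by rewrite card_gt0; apply/set0Pn; exists a; apply: abX; rewrite !inE eqxx.
  have hU' : #|U'| <= n by rewrite cU'; move: hU X1; clear; lia.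
  have [S' [S'U sp' gS']] := IH U' hU' (PUsub _ (subsetDl U X)).
  have S'X u : u \in S' -> (u \in U) && (u \notin X).
    by move/(subsetP S'U); rewrite in_setD andbC.
  have abS' y : y \in [set a; b] -> y \notin S'.
    by move=> yab; apply/negP=> /S'X /andP[_]; rewrite abX.
  exists ([set a; b] :|: S'); split.
  + rewrite subUset (subset_trans S'U) ?subsetDl // andbT.
    by apply/subsetP=> y; rewrite !inE => /orP[]/eqP->.
  + move=> w; rewrite in_setU => /orP[wab|wS].
      have wU : w \in U by move: wab; rewrite !inE => /orP[]/eqP->.
      apply: (@leq_trans #|[set a; b] :\ w|).
        apply: subset_leq_card; apply/subsetP=> u; rewrite !inE.
        case/andP=> uS ewu.
        have uU : u \in U.
          by move: uS => /orP[/orP[]/eqP->//|/S'X/andP[]].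
        have uX := NbX w u wab uU ewu.
        have uab : (u == a) || (u == b).
          move: uS => /orP[//|/S'X/andP[_]]; by rewrite uX.
        rewrite uab andbT; apply/eqP=> uw; by rewrite uw eirr in ewu.
      by have := cardsD1 w [set a; b]; rewrite wab cards2 ab /= add1n => -[<-].
    suff -> : [set u in [set a; b] :|: S' | e w u] = [set u in S' | e w u] by apply: sp'.
    apply/setP=> u; rewrite !inE; case uab: ((u == a) || (u == b)) => //=.
    have /andP[wU wX] := S'X w wS.
    have -> : e w u = false.
      apply/negP=> ewu; move: wX; rewrite (NbX u w) //; first by rewrite !inE.
      by rewrite esym.
    by rewrite andbF.
  + have -> : #|[set a; b] :|: S'| = 2 + #|S'|.
      rewrite -setUA cardsU1 cardsU1 in_setU1 negb_or.
      rewrite (abS' a) ?(abS' b) ?inE ?eqxx ?orbT // ab /=.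
      by rewrite add1n add1n.
    apply: leq_trans (gfun4 c4 (subset_leq_card XU)) _.
    by rewrite -cU' addnC leq_add2l.
Qed.

End G.

Section G.
Variable V : finType.
Variable e : rel V.
Hypothesis esym : symmetric e.
Hypothesis eirr : irreflexive e.

Lemma cactus_Pp : cactus e -> Pp e [set: V].
Proof.
move=> /forallP C B _ nsB v vB.
have [B0 mB0 sub] := maxset_exists (P := nonseparable e) nsB.
have := C B0; rewrite /is_block mB0 /= => /or3P[].
- case/and3P=> _ _ /forallP/(_ v); rewrite (subsetP sub _ vB) /= => /eqP <-.
  apply: subset_leq_card; apply/subsetP=> u; rewrite !inE => /andP[uB ->].
  by rewrite (subsetP sub _ uB).
- case/andP=> /eqP c2 _; rewrite -c2; apply: leq_trans (subset_leq_card sub).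
  by apply: subset_leq_card; apply/subsetP=> u; rewrite inE => /andP[].
- move=> /eqP c1; apply: (@leq_trans 1); last by [].
  rewrite -c1; apply: leq_trans (subset_leq_card sub).
  by apply: subset_leq_card; apply/subsetP=> u; rewrite inE => /andP[].
Qed.

Lemma deg2_cactus : (forall v, #|[set u | e v u]| <= 2) -> cactus e.
Proof.
move=> deg; apply/forallP=> B; apply/implyP=> /maxsetp /and3P[B0 cB /forallP dB].
have conn (A : {set V}) x y : induced_connected e A -> x \in A -> y \in A ->
    connect (induced e A) x y.
  by move=> /forallP/(_ x)/implyP H xA yA; move: (H xA) => /forallP/(_ y)/implyP; apply.
case: (ltnP 2 #|B|) => hB.
  apply/orP; left; apply/and3P; split => //; apply/forallP=> v; apply/implyP=> vB.
  rewrite eqn_leq; apply/andP; split.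
    apply: leq_trans (deg v); apply: subset_leq_card; apply/subsetP=> u.
    by rewrite !inE => /andP[].
  rewrite leqNgt; apply/negP=> h1.
  case: (set0Pn [set u in B | e v u]) => [[u uN]|N0].
    have [uB evu] : u \in B /\ e v u by move: uN; rewrite inE => /andP[].
    have uniqN z : z \in B -> e v z -> z = u.
      move=> zB evz; apply/eqP; apply/negPn/negP=> zu.
      have := @ccard2 _ [set u in B | e v u] z u; rewrite !inE zB evz uB evu.
      by move=> /(_ isT isT zu); rewrite ltnNge -ltnS h1.
    have vu : v != u by apply/eqP=> vu; rewrite vu eirr in evu.
    have : B :\ u :\ v != set0.
      rewrite -card_gt0; have := cardsD1 u B; have := cardsD1 v (B :\ u).
      by rewrite uB !inE vu vB /=; move: hB; clear; lia.
    case/set0Pn=> w; rewrite !inE => /and3P[wv wu wB].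
    have := dB u; rewrite uB /= => cu.
    have := conn _ v w cu; rewrite !inE vu vB wu wB => /(_ isT isT) cvw.
    have vw : v != w by rewrite eq_sym.
    case: (first_step cvw vw) => [z]; rewrite /induced /= !inE => /and3P[_ /andP[zu zB] evz].
    by move: zu; rewrite (uniqN z zB evz) eqxx.
  have : B :\ v != set0.
    rewrite -card_gt0; have := cardsD1 v B; rewrite vB /=; move: hB; clear; lia.
  case/set0Pn=> w; rewrite !inE => /andP[wv wB].
  have cvw : connect (induced e B) v w by apply: conn.
  have vw : v != w by rewrite eq_sym.
  case: (first_step cvw vw) => [z]; rewrite /induced /= => /and3P[_ zB evz].
  by apply: N0; exists z; rewrite inE zB evz.
apply/orP; right; apply/orP.
move: hB; rewrite leq_eqVlt ltnS leq_eqVlt ltnS leqn0 => /orP[/eqP h2|/orP[/eqP h1|/eqP h0]].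
- left; rewrite h2 eqxx /=; apply/forallP=> x; apply/implyP=> xB.
  apply/forallP=> y; apply/implyP=> yB; apply/implyP=> xy.
  have cxy : connect (induced e B) x y by apply: conn.
  case: (first_step cxy xy) => [z]; rewrite /induced /= => /and3P[_ zB exz].
  case: (eqVneq z y) => [<- //|zy].
  have zx : z != x by apply/eqP=> zx; rewrite zx eirr in exz.
  have xz : x != z by rewrite eq_sym.
  have yz : y != z by rewrite eq_sym.
  by have := ccard3 xB yB zB xy xz yz; rewrite h2.
- by right; rewrite h1.
- by move: B0; rewrite -card_gt0 h0.
Qed.

End G.

Definition ce (n : nat) : rel (ordinal n) := fun x y => (nat_of_ord x %/ 4 == nat_of_ord y %/ 4) && ((nat_of_ord x + nat_of_ord y) %% 2 == 1).
Arguments ce n x y : clear implicits.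

Lemma ce_sym n : symmetric (ce n).
Proof. by move=> x y; rewrite /ce /= eq_sym addnC. Qed.

Lemma ce_irr n : irreflexive (ce n).
Proof. move=> x; rewrite /ce /=; apply/negP => /andP[_ /eqP]; lia. Qed.

Lemma ce_deg n (v : 'I_n) : #|[set u | ce n v u]| <= 2.
Proof.
rewrite -(@card_in_imset _ _ (fun u : 'I_n => odd ((u %% 4) %/ 2))).
  by rewrite -card_bool; apply: max_card.
move=> u w; rewrite !inE /= => /andP[/eqP h1 /eqP h2] /andP[/eqP h3 /eqP h4] h5.
have h6 : ((u %% 4) %/ 2) %% 2 = ((w %% 4) %/ 2) %% 2 by rewrite !modn2 h5.
apply/val_inj => /=; move: h1 h2 h3 h4 h6; clear; lia.
Qed.

Lemma ce_nodense n i (S : {set 'I_n}) : 5 <= i -> ~~ dense_set (ce n) 1 i S.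
Proof.
move=> hi; apply/negP => /andP[/eqP cS /forallP sp].
have : S != set0 by rewrite -card_gt0 cS; move: hi; clear; lia.
case/set0Pn=> v vS.
have := sp v; rewrite vS /= => h1.
have sub : S \subset [set v] :|: [set u in S | compl_rel (ce n) v u] :|: [set u | ce n v u].
  apply/subsetP=> u uS; rewrite !inE uS /=.
  case: (eqVneq u v) => [//|uv] /=.
  by rewrite /compl_rel /= eq_sym uv /=; case: (ce n v u).
have := subset_leq_card sub.
have := leq_card_setU ([set v] :|: [set u in S | compl_rel (ce n) v u]) [set u | ce n v u].
have := leq_card_setU [set v] [set u in S | compl_rel (ce n) v u].
rewrite cards1 cS => [[c1 _] [c2 _]] c3.
have := leq_trans c3 (leq_trans c2 (leq_add c1 (ce_deg v))).
have := leq_add (leqnn 1) h1; move: hi; clear; set A := #|_|; lia.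
Qed.

Lemma ce_intro n (x y : 'I_n) : x %/ 4 = y %/ 4 -> (x + y) %% 2 = 1 -> ce n x y.
Proof. by rewrite /ce => -> ->; rewrite !eqxx. Qed.

Lemma ce_nosparse n j (S : {set 'I_n}) : 1 <= j ->
  n < (if odd j then 2 * j - 1 else 2 * j - 2) -> ~~ sparse_set (ce n) 1 j S.
Proof.
move=> hj hn; apply/negP => /andP[/eqP cS /forallP sp].
have spS v : v \in S -> #|[set u in S | ce n v u]| <= 1 by move=> vS; have := sp v; rewrite vS.
have nat_neq (a b : 'I_n) : a != b -> (a : nat) != b.
  by apply: contra => /eqP h; apply/eqP/val_inj.
have center (c a b : 'I_n) : c \in S -> a \in S -> b \in S -> a != b ->
    ce n c a -> ce n c b -> False.
  move=> cS' aS bS ab eca ecb.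
  have := @ccard2 _ [set u in S | ce n c u] a b; rewrite !inE aS bS eca ecb => /(_ isT isT ab).
  by rewrite ltnNge spS.
have three (a b c : 'I_n) : a \in S -> b \in S -> c \in S -> a != b -> b != c -> a != c ->
    a %/ 4 = b %/ 4 -> b %/ 4 = c %/ 4 -> False.
  move=> aS bS cS' ab bc ac h1 h2.
  have h3 : a %/ 4 = c %/ 4 by rewrite h1 h2.
  have [h1' h2' h3'] : [/\ b %/ 4 = a %/ 4, c %/ 4 = b %/ 4 & c %/ 4 = a %/ 4] by rewrite h1 h2.
  have ab' := nat_neq _ _ ab; have bc' := nat_neq _ _ bc; have ac' := nat_neq _ _ ac.
  have : ((a + b) %% 2 = 1 /\ (a + c) %% 2 = 1) \/ ((b + a) %% 2 = 1 /\ (b + c) %% 2 = 1)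
      \/ ((c + a) %% 2 = 1 /\ (c + b) %% 2 = 1).
    move: ab' bc' ac' h1 h2; clear; move=> /eqP ab' /eqP bc' /eqP ac' h1 h2; lia.
  case=> [[e1 e2]|[[e1 e2]|[e1 e2]]].
  - by apply: (center a b c) => //; apply: ce_intro.
  - by apply: (center b a c) => //; apply: ce_intro.
  - by apply: (center c a b) => //; apply: ce_intro.
pose cc (x : 'I_n) : bool := [exists y in S, (y %/ 4 == x %/ 4) && (y < x)].
pose gg (x : 'I_n) : nat := 2 * (x %/ 4) + cc x.
have ccP x : cc x -> exists2 y, y \in S & (y %/ 4 = x %/ 4) /\ (y < x).
  by case/existsP=> y /and3P[yS /eqP h1 h2]; exists y.
have ltne (a b : 'I_n) : a < b -> a != b.
  by move=> h; apply/eqP=> ab; rewrite ab ltnn in h.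
have inj : {in S &, injective gg}.
  move=> x y xS yS; rewrite /gg => hg.
  have [h1 h2] : x %/ 4 = y %/ 4 /\ cc x = cc y.
    by move: hg; case: (cc x); case: (cc y) => /=; clear; lia.
  case: (ltngtP x y) => [lt|lt|eq]; last by apply/val_inj.
  - have : cc y by apply/existsP; exists x; rewrite xS h1 eqxx lt.
    rewrite -h2 => /ccP[z zS [hz hzx]].
    have zx := ltne _ _ hzx; have xy := ltne _ _ lt.
    have zy : z != y by apply: ltne; apply: ltn_trans hzx lt.
    by exfalso; apply: (three z x y).
  - have : cc x by apply/existsP; exists y; rewrite yS h1 eqxx lt.
    rewrite h2 => /ccP[z zS [hz hzy]].
    have zy := ltne _ _ hzy; have yx := ltne _ _ lt.
    have zx : z != x by apply: ltne; apply: ltn_trans hzy lt.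
    by exfalso; apply: (three z y x) => //; rewrite -h1.
have bnd x : gg x < j - 1.
  have xn := ltn_ord x.
  have hc : cc x -> 0 < x %% 4.
    by case/ccP=> z _ [hz hzx]; move: hz hzx; clear; lia.
  rewrite /gg; move: hc hn xn; have := modn2 j; case: (odd j); case: (cc x) => /=;
  move=> hj2 hc hn xn; try (have := hc isT); move: hj hj2 hn xn; clear; lia.
have : #|S| <= j - 1.
  rewrite cardE -(size_map gg) -[j - 1](size_iota 0).
  apply: uniq_leq_size.
    rewrite map_inj_in_uniq ?enum_uniq //.
    by move=> x y; rewrite !mem_enum; apply: inj.
  by move=> k /mapP[x _ ->]; rewrite mem_iota add0n bnd.
by rewrite cS; move: hj; clear; lia.
Qed.

Lemma gfun_r j : 1 <= j -> j <= gfun (if odd j then 2*j-1 else 2*j-2).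
Proof. have := modn2 j. rewrite /gfun. case: (odd j) => /= H; lia. Qed.

Theorem theorem4p2 (i j : nat) (hi : 5 <= i) (hj : 1 <= j) :
  is_ramsey_cactus 1 i j (if odd j then 2 * j - 1 else 2 * j - 2).
Proof.
split.
  move=> e [esym eirr] C; right.
  have PU := cactus_Pp C.
  have [S [_ spS gS]] := main_lb esym eirr PU.
  rewrite cardsT card_ord in gS.
  have jS : j <= #|S| := leq_trans (gfun_r hj) gS.
  exists [set x in take j (enum S)]; apply/andP; split.
    rewrite cardsE (card_uniqP _); last by apply: take_uniq; apply: enum_uniq.
    by rewrite size_take -cardE; case: ltnP => // h; apply/eqP; apply/anti_leq; rewrite h jS.
  apply/forallP=> v; apply/implyP; rewrite inE => vt.
  have vS : v \in S by move: (mem_take vt); rewrite mem_enum.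
  apply: leq_trans (spS v vS); apply: subset_leq_card; apply/subsetP=> u; rewrite !inE.
  by case/andP=> /mem_take; rewrite mem_enum => -> ->.
move=> n hn H.
have [[S dS]|[S sS]] := H (ce n) (conj (@ce_sym n) (@ce_irr n)) (deg2_cactus (@ce_irr n) (@ce_deg n)).
  by move: dS; apply/negP; apply: ce_nodense.
by move: sS; apply/negP; apply: ce_nosparse.
Qed.
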